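(* Let $A\in\mathbb{R}^{n\times n}$, $B\in\mathbb{R}^{n\times m}$, $C\in\mathbb{R}^{p\times n}$ and let $\mathscr{G}$ be a weighted directed graph on $N$ nodes with Laplacian $\mathcal{L}$, and consider the dynamic network $(A,B,C,\mathscr{G})$ described in the context. Let $L_{G}=+\infty$, $L_{K}=+\infty$ and $\varrho=1$. Suppose that for any given positive constants $C_{x}$, $C_{\hat{x}}$, $C_{\hat{u}}$ there exist a communication protocol $H(\gamma,\alpha,\alpha_{u},L,L_{u},G)\in\mathscr{H}(\varrho,L_{G})$ and a control protocol $U(K)\in\mathscr{U}(L_{K})$ such that for any initial conditions with $\|X(0)\|_\infty<C_{x}$, $\|\hat{X}(0)\|_\infty<C_{\hat{x}}$ and $\|\hat{U}(0)\|_\infty<C_{\hat{u}}$, the closed-loop network achieves inter-agent state observation under $H$ and $U$, i.e. $\lim_{t\to\infty}(x_j(t)-\hat x_j(t))=0$ for all $j=1,\dots,N$. Then $(A,C)$ is detectable.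
   Context: Agents $i=1,\dots,N$ have dynamics $x_i(t+1)=Ax_i(t)+Bu_i(t)$, $y_i(t)=Cx_i(t)$, $t=0,1,\dots$. The communication graph $\mathscr{G}$ has node set $\{1,\dots,N\}$ and weighted adjacency matrix $\mathscr{A}=[a_{ij}]$ with $a_{ii}=0$, $a_{ij}\ge0$, and $a_{ij}>0$ iff there is a channel from $j$ to $i$; $N_i=\{j: a_{ij}>0\}$. The Laplacian is $\mathcal{L}=\mathrm{diag}(\sum_j a_{1j},\dots,\sum_j a_{Nj})-\mathscr{A}$. Norms: for a vector, $\|\cdot\|_\infty$ is the max norm; for a matrix, $\|\cdot\|$ is the spectral (Euclidean operator) norm. Quantizer: for $p\in(0,1]$ and a positive integer $M$, $Q_{p,M}(y)=ip$ if $ip-p/2\le y<ip+p/2$, $i=0,1,\dots,M-1$; $Q_{p,M}(y)=Mp$ if $y\ge Mp-p/2$; $Q_{p,M}(y)=-Q_{p,M}(-y)$ if $y<-p/2$; applied componentwise to vectors. Communication protocol set: for $\varrho\in(0,1]$ and $L_G\in\mathbb{R}^+\cup\{+\infty\}$, $\mathscr{H}(\varrho,L_G)$ consists of protocols $H(\gamma,\alpha,\alpha_u,L,L_u,G)$ with $\gamma\in(0,\varrho)$, $\alpha,\alpha_u\in(0,1]$, positive integers $L,L_u$, and $G\in\mathbb{R}^{n\times p}$ with $\|G\|<L_G$. Under such a protocol, each agent $j$ runs the encoder: $\hat x_j(0)=\hat x_{j0}$, $\hat u_j(0)=\hat u_{j0}$, and for $t\ge1$: $s_j(t)=Q_{\alpha,L}\big((y_j(t-1)-C\hat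 x_j(t-1))/\gamma^{t-1}\big)$, $\hat x_j(t)=A\hat x_j(t-1)+\gamma^{t-1}Gs_j(t)+B\hat u_j(t-1)$, $s_{u,j}(t)=Q_{\alpha_u,L_u}\big((u_j(t)-\hat u_j(t-1))/\gamma^{t-1}\big)$, $\hat u_j(t)=\hat u_j(t-1)+\gamma^{t-1}s_{u,j}(t)$; the symbols $s_j(t),s_{u,j}(t)$ are sent over each channel $(j,i)$, and receiver $i$ runs the decoder $\hat x_{ji}(0)=\hat x_{j0}$, $\hat u_{ji}(0)=\hat u_{j0}$, $\hat x_{ji}(t)=A\hat x_{ji}(t-1)+\gamma^{t-1}Gs_j(t)+B\hat u_{ji}(t-1)$, $\hat u_{ji}(t)=\hat u_{ji}(t-1)+\gamma^{t-1}s_{u,j}(t)$ (so $\hat x_{ji}(t)=\hat x_j(t)$). Control protocol set: for $L_K\in\mathbb{R}^+\cup\{+\infty\}$, $\mathscr{U}(L_K)$ consists of protocols $U(K)$, $K\in\mathbb{R}^{m\times n}$ with $\|K\|<L_K$, given by $u_i(t)=K\sum_{j\in N_i}a_{ij}(\hat x_{ji}(t)-\hat x_i(t))$, $t\ge0$. Stacked vectors: $X(t)=(x_1^T(t),\dots,x_N^T(t))^T$, $\hat X(t)=(\hat x_1^T(t),\dots,\hat x_N^T(t))^T$, $\hat U(t)=(\hat u_1^T(t),\dots,\hat u_N^T(t))^T$. *)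

(* Defs.v *)
From HB Require Import structures.
From mathcomp Require Import all_boot all_order all_algebra.
From mathcomp Require Import reals.
From mathcomp Require Import complex.
Set Implicit Arguments. Unset Strict Implicit. Unset Printing Implicit Defensive.
Import Order.TTheory GRing.Theory Num.Theory.
Local Open Scope ring_scope.

Section Defs.
Variable R : realType.

Definition Qpos (p : R) (M : nat) (y : R) : R :=
  if M%:R * p - p / 2 <= y then M%:R * p
  else (Num.floor (y / p + 1 / 2))%:~R * p.
(* Q_{p,M}(y) = i p  iff i p - p/2 <= y < i p + p/2 (i = 0..M-1),
   = M p if y >= M p - p/2, and = - Q_{p,M}(-y) if y < -p/2. *)
Definition Qnt (p : R) (M : nat) (y : R) : R :=
  if y < - (p / 2) then - Qpos p M (- y) else Qpos p M y.
Definition Qvec (k : nat) (p : R) (M : nat) (v : 'cV[R]_k) : 'cV[R]_k :=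
  map_mx (Qnt p M) v.

Variables (n m pp N : nat).
Variables (A : 'M[R]_n) (B : 'M[R]_(n, m)) (C : 'M[R]_(pp, n)) (adj : 'M[R]_N).

Record cl_state := CLState {
  cl_x : 'I_N -> 'cV[R]_n;
  cl_xh : 'I_N -> 'cV[R]_n;
  cl_uh : 'I_N -> 'cV[R]_m }.

(* control protocol U(K): u_i = K sum_{j in N_i} a_ij (hat x_ji - hat x_i),
   with hat x_ji = hat x_j *)
Definition ctrl (K : 'M[R]_(m, n)) (xh : 'I_N -> 'cV[R]_n) (i : 'I_N) : 'cV[R]_m :=
  K *m (\sum_(j < N | 0 < adj i j) adj i j *: (xh j - xh i)).

Definition cl_step (gam al alu : R) (L Lu : nat) (G : 'M[R]_(n, pp))
  (K : 'M[R]_(m, n)) (t : nat) (s : cl_state) : cl_state :=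
  let xh' := fun j => A *m cl_xh s j
      + gam ^+ t *: (G *m Qvec al L ((gam ^+ t)^-1 *: (C *m cl_x s j - C *m cl_xh s j)))
      + B *m cl_uh s j in
  let uh' := fun j => cl_uh s j
      + gam ^+ t *: Qvec alu Lu ((gam ^+ t)^-1 *: (ctrl K xh' j - cl_uh s j)) in
  let x' := fun i => A *m cl_x s i + B *m ctrl K (cl_xh s) i in
  CLState x' xh' uh'.

Fixpoint cl_traj (gam al alu : R) (L Lu : nat) (G : 'M[R]_(n, pp))
  (K : 'M[R]_(m, n)) (s0 : cl_state) (t : nat) : cl_state :=
  match t with
  | 0 => s0
  | t'.+1 => cl_step gam al alu L Lu G K t' (cl_traj gam al alu L Lu G K s0 t')
  end.

End Defs.

(* sequence of vectors converging to 0 (componentwise = in any norm) *)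
Definition vec_to0 (R : realType) (k : nat) (v : nat -> 'cV[R]_k) : Prop :=
  forall eps : R, 0 < eps -> exists T : nat, forall t : nat, (T <= t)%N ->
    forall r : 'I_k, `|v t r ord0| < eps.

(* Detectability of (A, C): Hautus/PBH rank test,
   rank [lam I - A; C] = n for every complex lam with |lam| >= 1 *)
Definition detectable (R : realType) (n p : nat) (A : 'M[R]_n) (C : 'M[R]_(p, n)) : Prop :=
  forall lam : R[i], 1 <= `|lam| ->
    \rank (col_mx (lam%:M - map_mx (fun x : R => x%:C%C) A)
                  (map_mx (fun x : R => x%:C%C) C)) = n.

(* Main.v *)
Require Import Defs.
From HB Require Import structures.
From mathcomp Require Import all_boot all_order all_algebra.
From mathcomp Require Import reals complex.
From mathcomp Require Import lra.
From Stdlib Require Import FunctionalExtensionality Classical.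
Import Order.TTheory GRing.Theory Num.Theory.
Local Open Scope ring_scope.

Section Traj.
Variables (R : realType) (n m p N : nat).
Variables (A : 'M[R]_n) (B : 'M[R]_(n, m)) (C : 'M[R]_(p, n)) (adj : 'M[R]_N).
Variables (gam al alu : R) (L Lu : nat) (G : 'M[R]_(n, p)) (K : 'M[R]_(m, n)).

Definition xhF (t : nat) (yx : 'I_N -> 'cV[R]_p) (xh : 'I_N -> 'cV[R]_n)
   (uh : 'I_N -> 'cV[R]_m) : 'I_N -> 'cV[R]_n :=
  fun j => A *m xh j
      + gam ^+ t *: (G *m Qvec al L ((gam ^+ t)^-1 *: (yx j - C *m xh j)))
      + B *m uh j.
Definition uhF (t : nat) (xh' : 'I_N -> 'cV[R]_n) (uh : 'I_N -> 'cV[R]_m)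
   : 'I_N -> 'cV[R]_m :=
  fun j => uh j
      + gam ^+ t *: Qvec alu Lu ((gam ^+ t)^-1 *: (ctrl adj K xh' j - uh j)).

Lemma xh_step t s : cl_xh (cl_step A B C adj gam al alu L Lu G K t s) =
  xhF t (fun j => C *m cl_x s j) (cl_xh s) (cl_uh s).
Proof. by []. Qed.
Lemma uh_step t s : cl_uh (cl_step A B C adj gam al alu L Lu G K t s) =
  uhF t (xhF t (fun j => C *m cl_x s j) (cl_xh s) (cl_uh s)) (cl_uh s).
Proof. by []. Qed.
Lemma x_step t s i : cl_x (cl_step A B C adj gam al alu L Lu G K t s) i =
  A *m cl_x s i + B *m ctrl adj K (cl_xh s) i.
Proof. by []. Qed.

Lemma traj_S s t : cl_traj A B C adj gam al alu L Lu G K s t.+1 =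
  cl_step A B C adj gam al alu L Lu G K t (cl_traj A B C adj gam al alu L Lu G K s t).
Proof. by []. Qed.

Lemma traj_shift (d : nat -> 'cV[R]_n) s0 s0' :
  (forall t, d t.+1 = A *m d t) -> (forall t, C *m d t = 0) ->
  cl_xh s0' = cl_xh s0 -> cl_uh s0' = cl_uh s0 ->
  (forall i, cl_x s0' i = cl_x s0 i + d 0%N) ->
  forall t,
   cl_xh (cl_traj A B C adj gam al alu L Lu G K s0' t)
     = cl_xh (cl_traj A B C adj gam al alu L Lu G K s0 t) /\
   cl_uh (cl_traj A B C adj gam al alu L Lu G K s0' t)
     = cl_uh (cl_traj A B C adj gam al alu L Lu G K s0 t) /\
   forall i, cl_x (cl_traj A B C adj gam al alu L Lu G K s0' t) i
     = cl_x (cl_traj A B C adj gam al alu L Lu G K s0 t) i + d t.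
Proof.
move=> Hd Cd H1 H2 H3; elim=> [|t [Hxh [Huh Hx]]]; first by [].
rewrite !traj_S.
have E1 : (fun j => C *m cl_x (cl_traj A B C adj gam al alu L Lu G K s0' t) j)
   = (fun j => C *m cl_x (cl_traj A B C adj gam al alu L Lu G K s0 t) j).
  by apply: functional_extensionality => j; rewrite Hx mulmxDr Cd addr0.
rewrite !xh_step !uh_step E1 Hxh Huh; split; first by [].
split; first by [].
move=> i; rewrite !x_step Hx Hxh Hd mulmxDr -!addrA; congr (_ + _).
by rewrite addrC.
Qed.
End Traj.
Section Cplx.
Variable R : realType.

Lemma ReD (x y : R[i]) : complex.Re (x + y) = complex.Re x + complex.Re y.
Proof. by case: x; case: y. Qed.
Lemma ImD (x y : R[i]) : complex.Im (x + y) = complex.Im x + complex.Im y.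
Proof. by case: x; case: y. Qed.

Lemma ReM k l (M : 'M[R]_(k, l)) (z : 'cV[R[i]]_l) :
  map_mx (@complex.Re R) (map_mx (fun x : R => x%:C%C) M *m z) = M *m map_mx (@complex.Re R) z.
Proof.
apply/matrixP=> i j; rewrite !mxE (big_morph (@complex.Re R) ReD (erefl _)).
apply: eq_bigr => h _; rewrite !mxE; case: (z h j) => a b /=.
by rewrite mul0r subr0.
Qed.
Lemma ImM k l (M : 'M[R]_(k, l)) (z : 'cV[R[i]]_l) :
  map_mx (@complex.Im R) (map_mx (fun x : R => x%:C%C) M *m z) = M *m map_mx (@complex.Im R) z.
Proof.
apply/matrixP=> i j; rewrite !mxE (big_morph (@complex.Im R) ImD (erefl _)).
apply: eq_bigr => h _; rewrite !mxE; case: (z h j) => a b /=.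
by rewrite mul0r addr0.
Qed.

Lemma normC_real (x : R) : `|x%:C%C| = `|x|%:C%C.
Proof. by rewrite normc_def /= expr0n addr0 sqrtr_sqr. Qed.
Lemma normC_i : `|'i%C : R[i]| = 1.
Proof. by rewrite normc_def /= expr0n expr1n add0r sqrtr1. Qed.

Lemma norm_le_ReIm (z : R[i]) : `|z| <= (`|complex.Re z| + `|complex.Im z|)%:C%C.
Proof.
rewrite {1}[z]complexE rmorphD /=; apply: le_trans (ler_normD _ _) _.
by rewrite normrM normC_i mul1r !normC_real.
Qed.
End Cplx.

Lemma le_sum_term (R : realType) k (F : 'I_k -> R) (i : 'I_k) :
  (forall j, 0 <= F j) -> F i <= \sum_j F j.
Proof.
move=> H; rewrite (bigD1 i) //= lerDl; exact: sumr_ge0.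
Qed.

Theorem theorem6 (R : realType) (n m p N : nat)
  (A : 'M[R]_n) (B : 'M[R]_(n, m)) (C : 'M[R]_(p, n)) (adj : 'M[R]_N) :
  (0 < N)%N ->
  (forall i, adj i i = 0) ->
  (forall i j, 0 <= adj i j) ->
  (forall Cx Cxh Cuh : R, 0 < Cx -> 0 < Cxh -> 0 < Cuh ->
     exists (gam al alu : R) (L Lu : nat) (G : 'M[R]_(n, p)) (K : 'M[R]_(m, n)),
       [/\ 0 < gam < 1, 0 < al <= 1, 0 < alu <= 1, (0 < L)%N & (0 < Lu)%N] /\
       forall (x0 xh0 : 'I_N -> 'cV[R]_n) (uh0 : 'I_N -> 'cV[R]_m),
         (forall i k, `|x0 i k ord0| < Cx) ->
         (forall i k, `|xh0 i k ord0| < Cxh) ->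
         (forall i k, `|uh0 i k ord0| < Cuh) ->
         forall j : 'I_N,
           vec_to0 (fun t =>
             cl_x (cl_traj A B C adj gam al alu L Lu G K (CLState x0 xh0 uh0) t) j
           - cl_xh (cl_traj A B C adj gam al alu L Lu G K (CLState x0 xh0 uh0) t) j)) ->
  detectable A C.
Proof.
move=> HN _ _ H lam Hlam.
set Ac := map_mx (fun x : R => x%:C%C) A.
set Cc := map_mx (fun x : R => x%:C%C) C.
set M := col_mx (lam%:M - Ac) Cc.
apply/eqP; apply: contraT => Hne.
have HK : kermx M^T != 0 by rewrite kermx_eq0 /row_free mxrank_tr.
have [i [k Hik]] : exists i k, (kermx M^T) i k != 0.
  apply: NNPP => Hno; move/eqP: HK; apply; apply/matrixP => i k; rewrite [X in _ = X]mxE.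
  apply/eqP; apply: NNPP => Hx; apply: Hno; exists i, k; exact/negP.
set v : 'cV[R[i]]_n := (row i (kermx M^T))^T.
have Mv : M *m v = 0.
  by rewrite /v -{1}(trmxK M) -trmx_mul -row_mul mulmx_ker row0 trmx0.
move: Mv; rewrite /M mul_col_mx => /eqP; rewrite col_mx_eq0 => /andP [/eqP H1 /eqP Cv].
have Av : Ac *m v = lam *: v.
  by apply/eqP; move/eqP: H1; rewrite mulmxBl mul_scalar_mx subr_eq0 eq_sym.
have vk : v k ord0 != 0 by rewrite /v 2!mxE.
set wr := map_mx (@complex.Re R) v.
set wi := map_mx (@complex.Im R) v.
have Lpow : forall t, lam ^+ t *: v = iter t (mulmx Ac) v.
  elim=> [|t IH]; first by rewrite expr0 scale1r.
  by rewrite iterS -IH -scalemxAr Av scalerA -exprSr.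
have dr : forall t, iter t (mulmx A) wr = map_mx (@complex.Re R) (lam ^+ t *: v).
  elim=> [|t IH]; first by rewrite expr0 scale1r.
  by rewrite iterS IH !Lpow iterS ReM.
have di : forall t, iter t (mulmx A) wi = map_mx (@complex.Im R) (lam ^+ t *: v).
  elim=> [|t IH]; first by rewrite expr0 scale1r.
  by rewrite iterS IH !Lpow iterS ImM.
have Cvt : forall t, Cc *m (lam ^+ t *: v) = 0 by move=> t; rewrite -scalemxAr Cv scaler0.
have Cdr : forall t, C *m iter t (mulmx A) wr = 0.
  move=> t; rewrite dr -ReM Cvt; apply/matrixP => a b; rewrite !mxE //.
have Cdi : forall t, C *m iter t (mulmx A) wi = 0.
  move=> t; rewrite di -ImM Cvt; apply/matrixP => a b; rewrite !mxE //.
pose Cx := 1 + \sum_k0 (`|wr k0 ord0| + `|wi k0 ord0|).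
have Cx0 : 0 < Cx by rewrite ltr_wpDr // sumr_ge0 // => h _; rewrite addr_ge0.
have bndr : forall k0, `|wr k0 ord0| < Cx.
  move=> k0; have S := @le_sum_term _ _ (fun h => `|wr h ord0| + `|wi h ord0|) k0
    (fun h => addr_ge0 (normr_ge0 _) (normr_ge0 _)).
  have h1 := normr_ge0 (wi k0 ord0); have h2 := normr_ge0 (wr k0 ord0).
  rewrite /Cx; simpl in S; lra.
have bndi : forall k0, `|wi k0 ord0| < Cx.
  move=> k0; have S := @le_sum_term _ _ (fun h => `|wr h ord0| + `|wi h ord0|) k0
    (fun h => addr_ge0 (normr_ge0 _) (normr_ge0 _)).
  have h1 := normr_ge0 (wi k0 ord0); have h2 := normr_ge0 (wr k0 ord0).
  rewrite /Cx; simpl in S; lra.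
have [gam [al [alu [L [Lu [G [K [_ Hconv]]]]]]]] := H Cx 1 1 Cx0 ltr01 ltr01.
pose j := Ordinal HN.
pose z0 : 'I_N -> 'cV[R]_n := fun _ => 0.
pose zm : 'I_N -> 'cV[R]_m := fun _ => 0.
have b0 : forall (l : nat) (c : R), 0 < c -> forall (i0 : 'I_N) (k0 : 'I_l),
   `|(fun _ : 'I_N => (0 : 'cV[R]_l)) i0 k0 ord0| < c.
  by move=> l c c0 i0 k0; rewrite mxE normr0.
have E0 := Hconv z0 z0 zm (b0 _ _ Cx0) (b0 _ _ ltr01) (b0 _ _ ltr01) j.
have Er := Hconv (fun _ => wr) z0 zm (fun _ => bndr) (b0 _ _ ltr01) (b0 _ _ ltr01) j.
have Ei := Hconv (fun _ => wi) z0 zm (fun _ => bndi) (b0 _ _ ltr01) (b0 _ _ ltr01) j.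
set T := cl_traj A B C adj gam al alu L Lu G K.
have shift : forall w : 'cV[R]_n, (forall t, C *m iter t (mulmx A) w = 0) ->
  forall t, cl_x (T (CLState (fun _ => w) z0 zm) t) j
           - cl_xh (T (CLState (fun _ => w) z0 zm) t) j
  = (cl_x (T (CLState z0 z0 zm) t) j - cl_xh (T (CLState z0 z0 zm) t) j)
     + iter t (mulmx A) w.
  move=> w Cw t.
  have [Hxh [_ Hx]] := @traj_shift _ _ _ _ _ A B C adj gam al alu L Lu G K
      (fun t => iter t (mulmx A) w) (CLState z0 z0 zm) (CLState (fun _ => w) z0 zm)
      (fun t => erefl) Cw erefl erefl (fun i => esym (add0r _)) t.
  by rewrite /T Hx Hxh addrAC.
pose eps := Num.sqrt (complex.Re (v k ord0) ^+ 2 + complex.Im (v k ord0) ^+ 2).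
have Heps : `|v k ord0| = eps%:C%C by rewrite normc_def.
have eps0 : 0 < eps by rewrite -ltcR -Heps normr_gt0.
have e40 : 0 < eps / 4 by rewrite divr_gt0.
have [T0 HT0] := E0 _ e40.
have [Tr HTr] := Er _ e40.
have [Ti HTi] := Ei _ e40.
pose t := (T0 + Tr + Ti)%N.
have bd : forall w : 'cV[R]_n, (forall t, C *m iter t (mulmx A) w = 0) ->
   forall Tw, (Tw <= t)%N ->
   (forall t0, (Tw <= t0)%N -> forall r, `|(cl_x (T (CLState (fun _ => w) z0 zm) t0) j
           - cl_xh (T (CLState (fun _ => w) z0 zm) t0) j) r ord0| < eps / 4) ->
   `|iter t (mulmx A) w k ord0| < eps / 2.
  move=> w Cw Tw Htw HTw.
  have := HTw t Htw k; rewrite shift // mxE.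
  have := HT0 t (leq_trans (leq_addr _ _) (leq_addr _ _)) k.
  move=> h1 h2.
  have -> : iter t (mulmx A) w k ord0 =
    ((cl_x (T (CLState z0 z0 zm) t) j - cl_xh (T (CLState z0 z0 zm) t) j) k ord0
      + iter t (mulmx A) w k ord0) -
    (cl_x (T (CLState z0 z0 zm) t) j - cl_xh (T (CLState z0 z0 zm) t) j) k ord0.
    by rewrite addrC addKr.
  apply: le_lt_trans (ler_normB _ _) _.
  lra.
have hr := bd wr Cdr Tr (leq_trans (leq_addl _ _) (leq_addr _ _)) HTr.
have hi := bd wi Cdi Ti (leq_addl _ _) HTi.
rewrite dr mxE in hr; rewrite di mxE in hi.
rewrite mxE in hr hi.
set zz := lam ^+ t * v k ord0 in hr hi.
have up : `|zz| < eps%:C%C.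
  apply: le_lt_trans (norm_le_ReIm _ zz) _; rewrite ltcR.
  lra.
have lo : eps%:C%C <= `|zz|.
  by rewrite -Heps /zz normrM normrX ler_peMl // exprn_ege1.
by move: (lt_le_trans up lo); rewrite ltxx.
Qed.
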